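(* Let $m\ge 7$ and $r$ be integers with $\lceil\frac{m}{2}\rceil<r<m-2$, and let $\mathcal{B}$ be the primitive, narrow-sense BCH code of length $2^m-1$ and designed distance $2^{m-r}-1$. Then \[\mathcal{R}(r,m)^{*\perp}\subseteq\mathcal{R}(r,m)^*\subset\mathcal{B}.\]
   Context: Let $n=2^m-1$. For a nonnegative integer $s$, $C_{s,n}=\{s2^i\bmod n : i\in\mathbb{N}\}$, $S_n$ is the set of smallest elements of the distinct cyclotomic cosets modulo $n$, $\alpha$ is a primitive $n$th root of unity in $\mathbb{F}_{2^m}$, and $M_s(x)=\prod_{i\in C_{s,n}}(x-\alpha^i)$. $\operatorname{w}_2(s)$ is the number of ones in the binary expansion of $s$. Cyclic codes of length $n$ are ideals of $\mathbb{F}_2[x]/(x^n-1)$ given by generator polynomials. The punctured Reed--Muller code $\mathcal{R}(r,m)^*$ ($r<m$) is the cyclic code of length $n$ with generator polynomial $\prod_{s\in S_n,\,1\le\operatorname{w}_2(s)\le m-r-1}M_s(x)$, and $\mathcal{R}(r,m)^{*\perp}$ is its dual. The primitive, narrow-sense BCH code of length $n$ and designed distance $d$ is the cyclic code with generator polynomial $\prod_{i\in\bigcup_{j=0}^{d-2}C_{1+j,n}}(x-\alpha^i)$. *)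

(* Defs.v *)
From HB Require Import structures.
From mathcomp Require Import all_boot all_order all_algebra.
Set Implicit Arguments. Unset Strict Implicit. Unset Printing Implicit Defensive.
Import GRing.Theory.
Local Open Scope ring_scope.

Definition word (n : nat) := 'rV['F_2]_n.

Definition w2 (s : nat) : nat := (\sum_(i < s.+1) odd (s %/ 2 ^ i))%N.

(* Cyclotomic coset C_{s,n} = { s 2^j mod n : j in N }, as a subset of 'I_n.
   Since the multiplicative order of 2 mod odd n is < n, j < n suffices. *)
Definition cyc (n s : nat) : {set 'I_n} :=
  [set i : 'I_n | [exists j : 'I_n, nat_of_ord i == ((s * 2 ^ j) %% n)%N]].

Definition coset_leader (n : nat) (s : 'I_n) : bool :=
  [forall i : 'I_n, (i \in cyc n s) ==> (s <= i)%N].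

Definition minpolyM (F : fieldType) (alpha : F) (n s : nat) : {poly F} :=
  \prod_(i in cyc n s) ('X - (alpha ^+ i)%:P).

Definition wpoly (F : fieldType) (n : nat) (c : word n) : {poly F} :=
  \sum_(i < n) ((nat_of_ord (c 0 i))%:R : F) *: 'X^i.

(* Cyclic code of length n with generator polynomial g: the words c with
   g | c(x) (the ideal <g> of F_2[x]/(x^n-1), words of degree < n). *)
Definition cyclic_code (F : fieldType) (n : nat) (g : {poly F}) : {set word n} :=
  [set c : word n | g %| wpoly F c].

Definition dual_code (n : nat) (C : {set word n}) : {set word n} :=
  [set c : word n | [forall d in C, (\sum_(i < n) c 0 i * d 0 i) == 0]].

Definition RM_gen (F : fieldType) (alpha : F) (r m : nat) : {poly F} :=
  \prod_(s : 'I_(2 ^ m - 1) | coset_leader s && (1 <= w2 s <= m - r - 1)%N)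
     minpolyM alpha (2 ^ m - 1) s.

Definition punctured_RM (F : fieldType) (alpha : F) (r m : nat) :=
  @cyclic_code F (2 ^ m - 1) (RM_gen alpha r m).

Definition BCH_gen (F : fieldType) (alpha : F) (n d : nat) : {poly F} :=
  \prod_(i : 'I_n | [exists j : 'I_(d.-1), i \in cyc n (1 + j)])
     ('X - (alpha ^+ i)%:P).

Definition BCH_code (F : fieldType) (alpha : F) (n d : nat) :=
  @cyclic_code F n (BCH_gen alpha n d).

(* Main.v *)
Require Import Defs.
From HB Require Import structures.
From mathcomp Require Import all_boot all_order all_algebra all_field zify.
Set Implicit Arguments. Unset Strict Implicit. Unset Printing Implicit Defensive.

Lemma w2_big s N : (s < N)%N -> w2 s = (\sum_(i < N) odd (s %/ 2 ^ i))%N.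
Proof.
move=> sN; rewrite /w2.
rewrite -(subnKC sN) big_split_ord /= [X in (_ = _ + X)%N]big1 ?addn0 //.
move=> i _; rewrite divn_small //.
apply: leq_trans (ltn_expl _ (isT : 1 < 2)) _.
by rewrite leq_exp2l // addSn ltnW // ltnS leq_addr.
Qed.

Lemma w2_db (b : bool) a : w2 (b + a.*2) = (b + w2 a)%N.
Proof.
have h1 : (b + a.*2 < (b + a.*2).+2)%N by [].
have h2 : (a < (b + a.*2).+1)%N by rewrite ltnS -addnn addnA leq_addl.
rewrite (w2_big h1) (w2_big h2) big_ord_recl /= expn0 divn1 oddD odd_double addbF.
congr (_ + _)%N; first by case: b {h1 h2}.
apply: eq_bigr => i _.
rewrite /bump /= add1n expnS divnMA.
have -> : ((b + a.*2) %/ 2 = a)%N by rewrite -muln2 divnDMl // divn_small ?add0n // ltnS leq_b1.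
by [].
Qed.

Lemma w2_0 : w2 0 = 0%N. Proof. by rewrite /w2 big_ord1. Qed.
Lemma w2_1 : w2 1 = 1%N. Proof. by have := w2_db true 0; rewrite w2_0. Qed.
Lemma w2_2 a : w2 (a.*2) = w2 a. Proof. exact: (w2_db false a). Qed.

Lemma w2_split k h l : (l < 2 ^ k)%N -> w2 (2 ^ k * h + l) = (w2 h + w2 l)%N.
Proof.
elim: k l => [|k IH] l.
  by rewrite expn0 ltnS leqn0 => /eqP ->; rewrite mul1n addn0 w2_0 addn0.
move=> lk; rewrite [l in LHS](divn_eq l 2) modn2.
have -> : (2 ^ k.+1 * h + (l %/ 2 * 2 + odd l) = odd l + (2 ^ k * h + l %/ 2).*2)%N.
  by rewrite expnSr -!muln2; lia.
rewrite w2_db IH; last by rewrite ltn_divLR // -expnSr.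
by rewrite [l in RHS](divn_eq l 2) modn2 muln2 (addnC _ (odd l)) w2_db; lia.
Qed.

Lemma w2_compl k x : (x < 2 ^ k)%N -> w2 (2 ^ k - 1 - x) = (k - w2 x)%N /\ (w2 x <= k)%N.
Proof.
elim: k x => [|k IH] x.
  by rewrite expn0 ltnS leqn0 => /eqP ->; rewrite w2_0.
move=> xk; rewrite [x](divn_eq x 2) modn2.
have xk' : (x %/ 2 < 2 ^ k)%N by rewrite ltn_divLR // -expnSr.
have [IH1 IH2] := IH _ xk'.
have -> : (2 ^ k.+1 - 1 - (x %/ 2 * 2 + odd x) = ~~ odd x + (2 ^ k - 1 - x %/ 2).*2)%N.
  rewrite expnS -!muln2; case: (odd x) => /=; lia.
rewrite w2_db IH1 (addnC _ (odd x)) muln2 w2_db.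
case: (odd x) => /=; lia.
Qed.

Lemma w2_pos x : (0 < x)%N -> (0 < w2 x)%N.
Proof.
elim/ltn_ind: x => x IH x0.
rewrite [x in w2 x](divn_eq x 2) modn2 addnC muln2 w2_db.
case ox: (odd x) => //=; rewrite add0n; apply: IH.
  by rewrite ltn_divLR // ltn_Pmulr.
rewrite divn_gt0 //; move: x0 ox; case: x => [|[|x]] //.
Qed.

Section Cosets.
Variable m : nat.
Hypothesis m2 : (2 <= m)%N.
Local Notation N := (2 ^ m - 1)%N.

Lemma N_gt1 : (1 < N)%N.
Proof.
have : (2 ^ 2 <= 2 ^ m)%N by rewrite leq_exp2l.
rewrite (_ : 2 ^ 2 = 4)%N //; lia.
Qed.

Lemma m_ltN : (m < N)%N.
Proof.
have := ltn_expl m (isT : 1 < 2).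
have : (2 ^ 2 <= 2 ^ m)%N by rewrite leq_exp2l.
have h : (m.+1 < 2 ^ m)%N.
  elim: m m2 => [|k IH] //; case: k IH => [|[|k]] IH _ //.
  rewrite expnS; have := IH isT; lia.
lia.
Qed.

Lemma pow_m_mod : (2 ^ m = 1 %[mod N])%N.
Proof.
transitivity ((1 + N) %% N)%N; first by congr (_ %% _)%N; have := N_gt1; lia.
by rewrite modnDr.
Qed.

Lemma modN_powm x e : (x * 2 ^ (m * e) = x %[mod N])%N.
Proof.
elim: e => [|e IH]; first by rewrite muln0 expn0 muln1.
rewrite mulnS expnD mulnC -mulnA -modnMmr (mulnC _ x) IH modnMmr.
by rewrite -modnMml pow_m_mod modnMml mul1n.
Qed.

Lemma rot_modm x e : (x * 2 ^ e %% N = x * 2 ^ (e %% m) %% N)%N.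
Proof.
rewrite [e in LHS](divn_eq e m) expnD mulnA (mulnC _ m) -modnMml modN_powm.
by rewrite modnMml.
Qed.

Lemma cycP (i : 'I_N) s : reflect (exists e, nat_of_ord i = s * 2 ^ e %% N)%N (i \in cyc N s).
Proof.
rewrite inE; apply: (iffP existsP) => [[j /eqP ->]|[e ->]]; first by exists j.
have hm : (e %% m < N)%N.
  have := m_ltN; have : (e %% m < m)%N by rewrite ltn_mod; lia.
  lia.
by exists (Ordinal hm); rewrite /= rot_modm.
Qed.

Lemma rot_trans i s u a b :
  i = (s * 2 ^ a %% N)%N -> s = (u * 2 ^ b %% N)%N -> i = (u * 2 ^ (b + a) %% N)%N.
Proof. by move=> -> ->; rewrite modnMml expnD mulnA. Qed.

Lemma rot_sym x y e : (y < N)%N -> x = (y * 2 ^ e %% N)%N -> y = (x * 2 ^ (m * e - e) %% N)%N.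
Proof.
move=> yN ->; rewrite modnMml -mulnA -expnD subnKC; last by rewrite leq_pmull; lia.
by rewrite modN_powm modn_small.
Qed.

Lemma w2_rot1 x : (x < N)%N -> w2 (x * 2 %% N) = w2 x.
Proof.
move=> xN; set P := (2 ^ m.-1)%N.
have e2 : (2 ^ m = P * 2)%N by rewrite /P -expnSr prednK //; lia.
have P1 : (1 < P)%N.
  have : (2 ^ 1 <= P)%N by rewrite /P leq_exp2l //; lia.
  by rewrite expn1.
rewrite [x in LHS](divn_eq x P) [x in RHS](divn_eq x P).
have lP : (x %% P < P)%N by rewrite ltn_mod; lia.
have hP : (x %/ P < 2)%N by rewrite ltn_divLR; lia.
move: (divn_eq x P) lP hP; set h := (x %/ P)%N; set l := (x %% P)%N => xe lP hP.
case: h hP xe => [|[|//]] _ xe.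
  rewrite mul0n add0n modn_small; last by rewrite e2 in xN; lia.
  by rewrite muln2 w2_2.
have -> : ((1 * P + l) * 2 = (1 + l.*2) + N)%N by rewrite e2 -muln2; lia.
rewrite modnDr modn_small; last by rewrite e2 in xN *; lia.
by rewrite (w2_db true) mul1n -(muln1 P) w2_split // w2_1.
Qed.

Lemma w2_rot x e : (x < N)%N -> w2 (x * 2 ^ e %% N) = w2 x.
Proof.
move=> xN; elim: e => [|e IH]; first by rewrite expn0 muln1 modn_small.
rewrite expnSr mulnA -modnMml w2_rot1 // ltn_mod; lia.
Qed.

Lemma w2_neg u : (u < N)%N -> (0 < u)%N -> w2 (N - u) = (m - w2 u)%N.
Proof.
move=> uN u0; have uk : (u < 2 ^ m)%N by lia.
by have [-> _] := w2_compl uk.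
Qed.

End Cosets.

Lemma big_rot m r f : (3 <= m)%N -> (1 <= r)%N -> (r < m)%N -> (m - r <= r)%N -> (f < m)%N ->
  (2 ^ (m - r) <= (1 + 2 ^ r) * 2 ^ f %% (2 ^ m - 1))%N.
Proof.
move=> m3 r1 rm mr fm.
set Q := (2 ^ (m - 2))%N.
have eQ : (2 ^ m = 4 * Q)%N by rewrite /Q -(expnD 2 2) subnKC //; lia.
have Q2 : (2 <= Q)%N by rewrite /Q -{1}(expn1 2) leq_exp2l //; lia.
have e2 : (2 ^ (m - r) <= 2 ^ r)%N by rewrite leq_exp2l.
case: (ltnP (f + r) m) => hfr.
  have h1 : (2 ^ f <= Q)%N by rewrite leq_exp2l //; lia.
  have h2 : (2 ^ (f + r) <= 2 * Q)%N.
    by rewrite /Q -(expnD 2 1) leq_exp2l //; lia.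
  have h3 : (2 ^ r <= 2 ^ (f + r))%N by rewrite leq_exp2l //; lia.
  rewrite mulnDl mul1n -expnD (addnC r f) modn_small; lia.
have eg : (f + r = m + (f + r - m))%N by lia.
set g := (f + r - m)%N in eg.
have h1 : (2 ^ f <= 2 * Q)%N by rewrite /Q -(expnD 2 1) leq_exp2l //; lia.
have h2 : (2 ^ g <= Q)%N by rewrite leq_exp2l //; lia.
have h3 : (2 ^ (m - r) <= 2 ^ f)%N by rewrite leq_exp2l //; lia.
rewrite mulnDl mul1n -expnD (addnC r f) eg expnD.
have -> : (2 ^ f + 2 ^ m * 2 ^ g = 2 ^ g * (2 ^ m - 1) + (2 ^ g + 2 ^ f))%N.
  have : (1 <= 2 ^ m)%N by rewrite expn_gt0.
  rewrite mulnBr muln1 (mulnC (2 ^ g)).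
  move: (2 ^ m) (2 ^ g) (2 ^ f) => A B C hA.
  have : (B <= A * B)%N by rewrite leq_pmull.
  lia.
rewrite modnMDl modn_small; lia.
Qed.
Section Leader.
Variable m : nat.
Hypothesis m2 : (2 <= m)%N.
Local Notation N := (2 ^ m - 1)%N.

Lemma cyc_refl (i : 'I_N) : i \in cyc N i.
Proof. by apply/cycP => //; exists 0%N; rewrite expn0 muln1 modn_small. Qed.

Lemma cyc_trans (j i : 'I_N) k : j \in cyc N i -> (i \in cyc N k) -> j \in cyc N k.
Proof.
move=> /(cycP m2) [a ha] /(cycP m2) [b hb]; apply/(cycP m2); exists (b + a)%N.
exact: rot_trans ha hb.
Qed.

Lemma cyc_sym (j i : 'I_N) : j \in cyc N i -> i \in cyc N j.
Proof.
move=> /(cycP m2) [a ha]; apply/(cycP m2); exists (m * a - a)%N.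
exact: rot_sym.
Qed.

Lemma cyc_w2 (j : 'I_N) s : (s < N)%N -> j \in cyc N s -> w2 j = w2 s.
Proof. by move=> sN /(cycP m2) [a ->]; rewrite w2_rot. Qed.

Definition ldr (i : 'I_N) : 'I_N := [arg min_(j < i | j \in cyc N i) (j : nat)].

Lemma ldr_spec i : ldr i \in cyc N i /\ forall j : 'I_N, j \in cyc N i -> (ldr i <= j)%N.
Proof.
rewrite /ldr; case: arg_minnP; first exact: cyc_refl.
by move=> j h1 h2; split.
Qed.

Lemma ldr_leader i : coset_leader (ldr i).
Proof.
have [h1 h2] := ldr_spec i.
apply/forallP => j; apply/implyP => hj; apply: h2; exact: cyc_trans hj h1.
Qed.

Lemma leader_ldr (s i : 'I_N) : coset_leader s -> i \in cyc N s -> ldr i = s.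
Proof.
move=> /forallP hs his; have [h1 h2] := ldr_spec i.
apply/val_inj/eqP; rewrite eqn_leq; apply/andP; split.
  by apply: h2; exact: cyc_sym.
by have := hs (ldr i); rewrite (cyc_trans h1 his).
Qed.

Lemma cyc_ldr i : i \in cyc N (ldr i).
Proof. by have [h1 _] := ldr_spec i; exact: cyc_sym. Qed.

End Leader.
Import GRing.Theory.
Local Open Scope ring_scope.

Section F2.
Variable F : fieldType.
Hypothesis c2 : 2%N \in [pchar F].

Definition fF (b : 'F_2) : F := (nat_of_ord b)%:R.
Definition bF (y : F) : 'F_2 := if y == 1 then 1 else 0.

Lemma two0 : (2%:R : F) = 0. Proof. exact: pcharf0 c2. Qed.

Lemma fF_add a b : fF (a + b) = fF a + fF b.
Proof.
rewrite /fF; case: a b => [[|[|a]] ha] [[|[|b]] hb] //=; rewrite ?add0r ?addr0 //.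
by rewrite -natrD two0.
Qed.

Lemma fF_mul a b : fF (a * b) = fF a * fF b.
Proof.
rewrite /fF; case: a b => [[|[|a]] ha] [[|[|b]] hb] //=; rewrite ?mul0r ?mulr0 ?mul1r //.
Qed.

Lemma fF_sum I (r : seq I) (P : pred I) (G : I -> 'F_2) :
  fF (\sum_(i <- r | P i) G i) = \sum_(i <- r | P i) fF (G i).
Proof. by apply: (big_morph fF fF_add); rewrite /fF. Qed.

Lemma fF01 b : fF b = 0 \/ fF b = 1.
Proof. by rewrite /fF; case: b => [[|[|b]] hb] //=; [left|right]. Qed.

Lemma fF_bF y : y ^+ 2 = y -> fF (bF y) = y.
Proof.
move=> hy; rewrite /bF; case: eqP => [->|ne]; first by [].
have : y * (y - 1) == 0 by rewrite mulrBr mulr1 -expr2 hy subrr.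
rewrite mulf_eq0 subr_eq0 => /orP [/eqP ->|/eqP //]; by [].
Qed.

Lemma frob2 (x y : F) k : (x + y) ^+ (2 ^ k) = x ^+ (2 ^ k) + y ^+ (2 ^ k).
Proof.
elim: k => [|k IH]; first by rewrite !expr1.
rewrite expnSr !exprM IH sqrrD.
by rewrite -mulr_natr two0 mulr0 addr0.
Qed.

End F2.
Section Trace.
Variable F : finFieldType.
Variable m : nat.
Hypothesis m2 : (2 <= m)%N.
Hypothesis hF : #|F| = (2 ^ m)%N.
Local Notation N := (2 ^ m - 1)%N.
Variable alpha : F.
Hypothesis halpha : N.-primitive_root alpha.

Lemma c2 : 2%N \in [pchar F].
Proof. exact: (card_finPcharP hF). Qed.

Definition Tr (y : F) : F := \sum_(k < m) y ^+ (2 ^ k).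

Lemma Tr_add x y : Tr (x + y) = Tr x + Tr y.
Proof. by rewrite /Tr -big_split; apply: eq_bigr => k _; rewrite (frob2 c2). Qed.

Lemma Tr0 : Tr 0 = 0.
Proof. by rewrite /Tr big1 // => k _; rewrite expr0n expn_eq0. Qed.

Lemma Tr_sum I (r : seq I) (P : pred I) (G : I -> F) :
  Tr (\sum_(i <- r | P i) G i) = \sum_(i <- r | P i) Tr (G i).
Proof. exact: (big_morph Tr Tr_add Tr0). Qed.

Lemma Tr_sq y : Tr y ^+ 2 = Tr y.
Proof.
rewrite -(pFrobenius_autE c2) /Tr rmorph_sum.
have [m' em] : exists m', m = m'.+1 by exists m.-1; rewrite prednK //; lia.
move: hF; rewrite em => hF'.
rewrite big_ord_recr big_ord_recl /= pFrobenius_autE -exprM -expnSr -hF' expf_card.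
rewrite addrC; congr (_ + _).
by apply: eq_bigr => k _; rewrite pFrobenius_autE -exprM -expnSr.
Qed.

Lemma Tr01 y : Tr y ^+ 2 = Tr y.
Proof. exact: Tr_sq. Qed.

Lemma Tr_scale b y : b ^+ 2 = b -> Tr (b * y) = b * Tr y.
Proof.
move=> hb; rewrite /Tr mulr_sumr; apply: eq_bigr => k _.
rewrite exprMn; congr (_ * _).
elim: (k : nat) => [|j IH]; first by rewrite expr1.
by rewrite expnSr exprM IH.
Qed.

Lemma geom_sum e : \sum_(x < N) (alpha ^+ e) ^+ x = if (N %| e)%N then 1 else 0.
Proof.
have N0 : (0 < N)%N by have := N_gt1 m2; lia.
case: ifP => hd.
  rewrite (prim_order_dvd halpha) in hd; rewrite (eqP hd).
  rewrite (eq_bigr (fun _ => 1)) => [|x _]; last by rewrite expr1n.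
  rewrite sumr_const card_ord.
  rewrite -(GRing.natr_mod_pchar c2).
  have -> : (N %% 2 = 1)%N.
    have -> : (N = 1 + (2 ^ m.-1 - 1) * 2)%N.
      have : (1 <= 2 ^ m.-1)%N by rewrite expn_gt0.
      have : (2 ^ m = 2 * 2 ^ m.-1)%N by rewrite -expnS prednK //; lia.
      lia.
    by rewrite addnC modnMDl.
  by [].
set z := alpha ^+ e.
have zN : z ^+ N = 1 by rewrite /z -exprM mulnC exprM (prim_expr_order halpha) expr1n.
have z1 : z - 1 != 0 by rewrite subr_eq0 /z -(prim_order_dvd halpha) hd.
have := subrX1 z N; rewrite zN subrr => /esym /eqP; rewrite mulf_eq0 (negbTE z1) /=.
by move/eqP.
Qed.


Lemma nondeg (K : pred 'I_m) (k0 : 'I_m) : val k0 = 0%N -> K k0 ->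
  exists a : F, \sum_(k < m | K k) a ^+ (2 ^ k) != 0.
Proof.
move=> k00 Kk0; apply/existsP; apply: contraT; rewrite negb_exists => /forallP hall.
pose P : {poly F} := \sum_(k < m | K k) 'X^(2 ^ k).
have Pe a : P.[a] = \sum_(k < m | K k) a ^+ (2 ^ k).
  by rewrite /P horner_sum; apply: eq_bigr => k _; rewrite hornerXn.
have P0 : P != 0.
  apply/eqP => /(congr1 (fun q : {poly F} => q`_1)).
  rewrite coef0 /P coef_sum (bigD1 k0) //= coefXn k00 expn0 eqxx big1 ?addr0.
    by move/eqP; rewrite oner_eq0.
  move=> k /andP [_ kk0]; rewrite coefXn.
  have : (1 != 2 ^ k)%N.
    rewrite -(expn0 2) eqn_exp2l //; apply: contra kk0 => /eqP h.
    by apply/eqP/val_inj; rewrite /= k00 h.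
  by move/negbTE ->.
have := max_ring_poly_roots P0 (rs := enum F).
rewrite uniq_rootsE enum_uniq /= => /(_ _ isT).
have -> : all (root P) (enum F).
  by apply/allP => a _; apply/rootP; rewrite Pe; apply/eqP; rewrite -[_ == 0]negbK hall.
move=> /(_ isT); rewrite -cardE hF.
have : (size P <= 2 ^ m)%N.
  apply: leq_trans (size_sum _ _ _) _; apply/bigmax_leqP => k _.
  rewrite size_polyXn; have := ltn_ord k.
  by move=> km; rewrite ltn_exp2l.
by move=> h1 h2; have := leq_trans h2 h1; rewrite ltnn.
Qed.

Lemma Tr_nondeg y : y != 0 -> exists a, Tr (a * y) != 0.
Proof.
move=> y0; have m0 : (0 < m)%N by lia.
have [b hb] := nondeg (k0 := Ordinal m0) (K := predT) erefl isT.
by exists (b / y); rewrite divfK //.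
Qed.

Lemma wpoly_horner (c : word N) z : (wpoly F c).[z] = \sum_(i < N) fF F (c 0 i) * z ^+ i.
Proof. by rewrite /wpoly horner_sum; apply: eq_bigr => i _; rewrite hornerZ hornerXn. Qed.

Definition tw (a : F) (t : nat) : word N := \row_(x < N) bF (Tr (a * alpha ^+ (t * x))).

Lemma tw_eval a t s :
  (wpoly F (tw a t)).[alpha ^+ s] = \sum_(k < m | (N %| t * 2 ^ k + s)%N) a ^+ (2 ^ k).
Proof.
rewrite wpoly_horner.
transitivity (\sum_(x < N) \sum_(k < m) a ^+ (2 ^ k) * (alpha ^+ (t * 2 ^ k + s)) ^+ x).
  apply: eq_bigr => x _; rewrite mxE (fF_bF (Tr01 _)) /Tr mulr_suml.
  apply: eq_bigr => k _.
  rewrite exprMn -!exprM -mulrA -exprD; congr (_ * alpha ^+ _).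
  by rewrite mulnDl mulnAC.
rewrite exchange_big /= [RHS]big_mkcond; apply: eq_bigr => k _.
by rewrite -mulr_sumr geom_sum; case: ifP => _; rewrite ?mulr1 ?mulr0.
Qed.

Lemma prod_root (P : pred 'I_N) (i : 'I_N) :
  P i -> root (\prod_(j | P j) ('X - (alpha ^+ j)%:P)) (alpha ^+ i).
Proof. by move=> Pi; rewrite (bigD1 i) //= rootM root_XsubC eqxx. Qed.

Lemma prod_dvd (P : pred 'I_N) p : (forall i : 'I_N, P i -> root p (alpha ^+ i)) ->
  \prod_(i | P i) ('X - (alpha ^+ i)%:P) %| p.
Proof.
move=> hP.
rewrite -big_enum /= -(big_map (fun i : 'I_N => alpha ^+ i) xpredT (fun z => 'X - z%:P)).
apply: uniq_roots_dvdp.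
  by apply/allP => z /mapP [i]; rewrite mem_enum => Pi ->; apply: hP.
rewrite uniq_rootsE map_inj_in_uniq ?enum_uniq // => i j _ _ /eqP.
rewrite (eq_prim_root_expr halpha) !modn_small // => /eqP; exact: val_inj.
Qed.

Lemma RM_gen_eq r : RM_gen alpha r m =
  \prod_(i : 'I_N | (1 <= w2 i <= m - r - 1)%N) ('X - (alpha ^+ i)%:P).
Proof.
rewrite /RM_gen /minpolyM; symmetry.
rewrite (partition_big (@ldr m) (fun s : 'I_N => coset_leader s && (1 <= w2 s <= m - r - 1)%N)).
  apply: eq_bigr => s /andP [hs hw]; apply: eq_bigl => i.
  apply/idP/idP => [/andP [_ /eqP <-]|his]; first exact: cyc_ldr.
  rewrite (leader_ldr m2 hs his) eqxx andbT.
  by rewrite (cyc_w2 m2 (ltn_ord s) his).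
move=> i hi; rewrite ldr_leader //=.
by rewrite -(cyc_w2 m2 (ltn_ord (ldr i)) (cyc_ldr m2 i)).
Qed.

End Trace.

Theorem lemma3 (m r : nat) (F : finFieldType) (alpha : F)
  (hm : (7 <= m)%N) (hr1 : (uphalf m < r)%N) (hr2 : (r < m - 2)%N)
  (hF : #|F| = (2 ^ m)%N)
  (halpha : (2 ^ m - 1).-primitive_root alpha) :
  dual_code (punctured_RM alpha r m) \subset punctured_RM alpha r m /\
  punctured_RM alpha r m \proper BCH_code alpha (2 ^ m - 1) (2 ^ (m - r) - 1).
Proof.
have m2 : (2 <= m)%N by lia.
have mu : (m <= (uphalf m).*2)%N.
  by rewrite uphalf_half -[m in (m <= _)%N]odd_double_half doubleD; case: (odd m).
set N := (2 ^ m - 1)%N.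
have c2F := c2 hF.
split.
  apply/subsetP => c; rewrite inE => /forallP hc.
  rewrite /punctured_RM /cyclic_code inE (RM_gen_eq m2) .
  apply: (prod_dvd halpha) => t /andP [t1 t2]; apply/rootP.
  apply/eqP; apply: contraT => y0; have [a ha] := Tr_nondeg m2 hF halpha y0.
  have twin : tw m alpha a t \in punctured_RM alpha r m.
    rewrite /punctured_RM /cyclic_code inE (RM_gen_eq m2).
    apply: (prod_dvd halpha) => s /andP [s1 s2]; apply/rootP.
    rewrite (tw_eval m2 hF halpha) big_pred0 // => k.
    apply/negP => hdiv.
    set u := (t * 2 ^ k %% N)%N.
    have wu : w2 u = w2 t by rewrite /u w2_rot.
    have uN : (u < N)%N by rewrite /u ltn_mod; have := N_gt1 m2; lia.
    have u0 : (0 < u)%N.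
      rewrite lt0n; apply/negP => /eqP u0; move: wu; rewrite u0 w2_0; lia.
    have hus : (N %| u + s)%N by rewrite /dvdn /u modnDml.
    have eus : (u + s = N)%N.
      have sN := ltn_ord s; move/dvdnP: hus => [q hq].
      case: q hq => [|[|q]] hq; [lia|lia|].
      move: hq; rewrite !mulSn; lia.
    have ws : w2 s = (m - w2 t)%N.
      by rewrite -wu -(w2_neg m2 uN u0); congr w2; lia.
    have wt : (w2 t <= m)%N.
      have : (t < 2 ^ m)%N by have := ltn_ord t; rewrite /N; lia.
      by move/w2_compl => [].
    lia.
  have := implyP (hc _) twin; move/eqP/(congr1 (fF F)).
  rewrite (fF_sum c2F) => hs.
  move: ha; rewrite wpoly_horner mulr_sumr (Tr_sum hF) => /negP ha; exfalso; apply: ha; apply/eqP.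
  rewrite -[RHS](_ : fF F 0 = 0) // -hs.
  apply: eq_bigr => x _.
  rewrite fF_mul mulrCA (Tr_scale m); last first.
    by case: (fF01 F (c 0 x)) => ->; rewrite ?expr0n ?expr1n.
  congr (_ * _); rewrite /tw mxE (fF_bF (Tr01 m2 hF halpha _)) -exprM //.
have hmr : (m - r <= r)%N by lia.
apply/properP; split.
  apply/subsetP => c; rewrite /punctured_RM /BCH_code /cyclic_code !inE (RM_gen_eq m2) => h.
  apply: dvdp_trans h; rewrite /BCH_gen.
  apply: (prod_dvd halpha) => i /existsP [j hj]; apply: (prod_root alpha (P := fun i : 'I_(2 ^ m - 1) => (1 <= w2 i <= m - r - 1)%N)).
  have hj2 : (1 + j < 2 ^ (m - r) - 1)%N by have := ltn_ord j; lia.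
  have hjN : (1 + j < N)%N.
    have : (2 ^ (m - r) <= 2 ^ m)%N by rewrite leq_exp2l //; lia.
    rewrite /N; lia.
  rewrite (cyc_w2 m2 hjN hj) w2_pos ?addn1 //=.
  have hx : (1 + j < 2 ^ (m - r))%N by lia.
  have [hc _] := w2_compl hx.
  have : (0 < w2 (2 ^ (m - r) - 1 - (1 + j)))%N by apply: w2_pos; lia.
  rewrite hc; lia.
have r1 : (1 <= r)%N by lia.
have hrm : (r < m)%N by lia.
set i0 := (1 + 2 ^ r)%N.
have i0N : (i0 < N)%N.
  have : (2 ^ r.+2 <= 2 ^ m)%N by rewrite leq_exp2l //; lia.
  rewrite /i0 /N !expnS; have := expn_gt0 2 r; lia.
have m0 : (0 < m)%N by lia.
pose t0 := (N - i0)%N.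
pose K := fun k : 'I_m => (N %| t0 * 2 ^ k + i0)%N.
have K0 : K (Ordinal m0) by rewrite /K /= expn0 muln1 /t0 subnK ?dvdnn // ltnW.
have [a ha] := nondeg hF (K := K) (k0 := Ordinal m0) erefl K0.
exists (tw m alpha a t0).
  rewrite /BCH_code /cyclic_code inE /BCH_gen.
  apply: (prod_dvd halpha) => s /existsP [j hj]; apply/rootP.
  rewrite (tw_eval m2 hF halpha) big_pred0 // => k; apply/negP => hd.
  have hsv : (nat_of_ord s = i0 * 2 ^ k %% N)%N.
    have e1 : ((t0 * 2 ^ k + s + i0 * 2 ^ k) %% N = (i0 * 2 ^ k) %% N)%N.
      by rewrite -modnDml (eqP hd) add0n.
    by rewrite -e1 addnAC -mulnDl subnK ?(ltnW i0N) // mulnC modnMDl modn_small.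
  have hjN : (1 + j < N)%N.
    have : (2 ^ (m - r) <= 2 ^ m)%N by rewrite leq_exp2l //; lia.
    have := ltn_ord j; rewrite /N; lia.
  move/(cycP m2): hj => [e he].
  have h1 := rot_sym m2 hjN he.
  have h2 := rot_trans h1 hsv.
  move: h2; rewrite (rot_modm m2) => h2.
  have m3 : (3 <= m)%N by lia.
  have fm : ((k + (m * e - e)) %% m < m)%N by rewrite ltn_mod.
  have := big_rot m3 r1 hrm hmr fm.
  rewrite -/N -h2.
  have := ltn_ord j; move: (nat_of_ord j) => jj; clear; lia.
apply/negP; rewrite /punctured_RM /cyclic_code inE (RM_gen_eq m2) => hd.
have w2i0 : w2 i0 = 2%N.
  rewrite /i0 addnC -[X in (X + 1)%N]muln1 w2_split ?w2_1 //.
  by rewrite -{1}(expn0 2) ltn_exp2l.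
have := root_dvdp hd (prod_root alpha
   (P := fun i : 'I_(2 ^ m - 1) => (1 <= w2 i <= m - r - 1)%N) (i := Ordinal i0N) _).
have hin : (1 <= w2 (Ordinal i0N) <= m - r - 1)%N.
  rewrite /= w2i0; move: hr2; clear; lia.
move=> /(_ hin) /rootP; rewrite (tw_eval m2 hF halpha) => /eqP.
by apply/negP.
Qed.
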